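(* Let $W_{max}$ be the maximum weight assigned to a vertex. The population size of DEMO on the weighted vertex cover problem is at all times upper bounded by $O\big(n(\log n+\log W_{max})\big)$.
   Context: Weighted vertex cover: $G=(V,E)$, $V=\{v_1,\dots,v_n\}$, $w:V\to\mathbb{N}^+$. Search points $x\in\{0,1\}^n$; $Cost(x)=\sum_i w(v_i)x_i$; $G(x)=(V(x),E(x))$ with $V(x)=V\setminus\{v_i:x_i=1\}$, $E(x)$ = edges with no selected endpoint; $LP(x)$ = optimal value of: minimize $\sum_{v_i\in V(x)}w(v_i)y_i$ s.t. $y_i+y_j\ge1$ for $\{v_i,v_j\}\in E(x)$, $0\le y_i\le1$. $f(x)=(Cost(x),LP(x))$, $f(x)\le f(y)$ componentwise. DEMO: $\delta=\frac1{2n}$, $b_1(x)=\lceil\log_{1+\delta}(1+Cost(x))\rceil$, $b_2(x)=\lceil\log_{1+\delta}(1+LP(x))\rceil$, $b=(b_1,b_2)$. Start with uniformly random $x$, $P=\{x\}$. Each iteration: choose $x\in P$ uniformly; create $x'$ by flipping each bit independently with probability $1/n$; if some $y\in P$ satisfies ($f(y)\le f(x')$ and $f(y)\ne f(x')$) or ($b(y)=b(x')$ and $Cost(y)+2LP(y)\le Cost(x')+2LP(x')$), discard $x'$; otherwise add $x'$ and delete all other $z\in P$ with $f(x')\le f(z)$ or $b(z)=b(x')$. *)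

(* Defs.v *)
From HB Require Import structures.
From mathcomp Require Import all_boot all_order all_algebra.
From mathcomp Require Import all_classical all_reals.
From mathcomp Require Import exp.
Set Implicit Arguments. Unset Strict Implicit. Unset Printing Implicit Defensive.
Import Order.TTheory GRing.Theory Num.Theory.
Local Open Scope classical_set_scope.
Local Open Scope ring_scope.

Section DEMO.
Variables (R : realType) (n : nat).
(* graph on vertex set 'I_n given by an edge relation e (assumed symmetric,
   irreflexive in the theorem); vertex weights w *)
Variables (e : rel 'I_n) (w : 'I_n -> nat).

Definition bits := {ffun 'I_n -> bool}.

Definition Cost (x : bits) : nat := (\sum_(i < n) w i * x i)%N.

Definition inVx (x : bits) (i : 'I_n) : bool := ~~ x i.
Definition inEx (x : bits) (i j : 'I_n) : bool := [&& e i j, ~~ x i & ~~ x j].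

Definition LP_feasible (x : bits) (y : 'I_n -> R) : Prop :=
  (forall i, inVx x i -> 0 <= y i <= 1) /\
  (forall i j, inEx x i j -> 1 <= y i + y j).

Definition LP_obj (x : bits) (y : 'I_n -> R) : R :=
  \sum_(i < n | inVx x i) (w i)%:R * y i.

(* LP(x) = optimal value of the LP relaxation (minimum = infimum) *)
Definition LP (x : bits) : R :=
  inf [set s | exists y, LP_feasible x y /\ s = LP_obj x y].

Definition fle (y x : bits) : bool :=
  ((Cost y)%:R <= (Cost x)%:R :> R) && (LP y <= LP x).

Definition fdom (y x : bits) : bool :=
  fle y x && ~~ (((Cost y)%:R == (Cost x)%:R :> R) && (LP y == LP x)).

Definition delta : R := (2 * n%:R)^-1.

Definition boxidx (v : R) : int := Num.ceil (ln (1 + v) / ln (1 + delta)).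

Definition b (x : bits) : int * int :=
  (boxidx (Cost x)%:R, boxidx (LP x)).

Definition sc (x : bits) : R := (Cost x)%:R + 2 * LP x.

Definition demo_step (P : {set bits}) (x' : bits) : {set bits} :=
  if [exists y in P, fdom y x' || ((b y == b x') && (sc y <= sc x'))]
  then P
  else x' |: [set z in P | ~~ (fle x' z || (b z == b x'))].

(* populations reachable (with positive probability) by DEMO: the initial
   population is any singleton, and every offspring x' of a parent in P has
   positive probability (standard bit mutation with rate 1/n, n >= 2). *)
Inductive reachable : {set bits} -> Prop :=
| reach_init (x : bits) : reachable [set x]
| reach_step (P : {set bits}) (x x' : bits) :
    reachable P -> x \in P -> reachable (demo_step P x').

Definition Wmax : nat := (\max_(i < n) w i)%N.

End DEMO.

(* Main.v *)
Require Import Defs.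
From HB Require Import structures.
From mathcomp Require Import all_boot all_order all_algebra.
From mathcomp Require Import all_classical all_reals.
From mathcomp Require Import exp zify ring lra.
Import Order.TTheory GRing.Theory Num.Theory.
Local Open Scope ring_scope.

Section Aux.
Variables (R : realType) (n : nat) (e : rel 'I_n) (w : 'I_n -> nat).

Lemma inv_reach (P : {set bits n}) : reachable R e w P ->
  forall y z, y \in P -> z \in P -> y != z ->
    ~~ fle R e w y z && (b R e w y != b R e w z).
Proof.
elim=> [x|Q x x' _ IH _] y z.
  by rewrite !finset.in_set1 => /eqP -> /eqP ->; rewrite eqxx.
rewrite /demo_step; case: ifP => [_|Hno]; first exact: IH.
move/negbT/existsPn: Hno => Hno.
have key : forall u, u \in Q -> ~~ fle R e w x' u -> ~~ fle R e w u x'.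
  move=> u uQ nf; apply/negP => fu.
  move: (Hno u); rewrite uQ /= negb_or => /andP[] + _.
  rewrite /fdom fu /= negbK => /andP[/eqP c /eqP l].
  by move: nf; rewrite /fle c l !lexx.
rewrite !finset.in_setU1 !finset.in_set.
case: (eqVneq y x') => [->|ny] /=; case: (eqVneq z x') => [->|nz] //=.
- by move=> _ /andP[zQ /norP[nf nb]] _; rewrite nf eq_sym nb.
- by move=> /andP[yQ /norP[nf nb]] _ _; rewrite (key y yQ nf) nb.
- by move=> /andP[yQ _] /andP[zQ _]; apply: IH.
Qed.


Lemma Cost_le x : (Cost w x <= n * Wmax w)%N.
Proof.
rewrite /Cost -[X in (_ <= X * _)%N]card_ord -sum_nat_const.
apply: leq_sum => i _.
have := leq_bigmax (F := w) i; rewrite -/(Wmax w) => hw.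
by case: (x i); rewrite ?muln1 ?muln0.
Qed.

Definition LPset x := [set s : R | exists y, LP_feasible e x (y : _ -> R) /\ s = LP_obj w x y]%classic.

Lemma LPset_ne x : LPset x (LP_obj w x (fun _ => 1 : R)).
Proof.
exists (fun _ => 1 : R); split => //; split => [i _|i j _]; first by rewrite ler01 lexx.
by rewrite lerDl ler01.
Qed.

Lemma LPset_lb x : lbound (LPset x) 0.
Proof.
move=> s [y [[Hy _] ->]]; rewrite /LP_obj; apply: sumr_ge0 => i Hi.
by apply: mulr_ge0 => //; case/andP: (Hy i Hi).
Qed.

Lemma LP_ge0 x : 0 <= LP R e w x.
Proof. by apply: lb_le_inf; [exists (LP_obj w x (fun _ => 1 : R)); apply: LPset_ne | apply: LPset_lb]. Qed.

Lemma LP_le x : LP R e w x <= (n * Wmax w)%:R.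
Proof.
apply: le_trans (ge_inf _ (LPset_ne x)) _; first by exists 0; apply: LPset_lb.
rewrite /LP_obj big_mkcond /= natrM mulrC mulr_natr -[X in _ *+ X]card_ord -sumr_const.
apply: ler_sum => i _; case: ifP => _; last by rewrite ler0n.
by rewrite mulr1 ler_nat; apply: (leq_bigmax (F := w) i).
Qed.

Lemma ln_lb (d : R) : 0 < d -> d / (1 + d) <= ln (1 + d).
Proof.
move=> d0; have d1 : 0 < 1 + d by lra.
have E : (1 + d)^-1 = 1 + (- (d / (1 + d))) by field; lra.
have H := lnV (x := 1 + d); rewrite posrE in H; have {}H := H d1; rewrite E in H.
have : ln (1 + - (d / (1 + d))) <= - (d / (1 + d)).
  apply: le_ln1Dx; rewrite ltrN2 ltr_pdivrMr // mul1r; lra.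
rewrite H; lra.
Qed.

Lemma lnd_ge : (0 < n)%N -> (2 * n%:R + 1)^-1 <= ln (1 + delta R n).
Proof.
move=> n0; have n0' : 0 < n%:R :> R by rewrite ltr0n.
have d0 : 0 < delta R n by rewrite /delta invr_gt0; lra.
apply: (le_trans _ (ln_lb _ d0)); rewrite le_eqVlt; apply/orP; left; apply/eqP.
rewrite /delta; field; lra.
Qed.

Lemma lnd_gt0 : (0 < n)%N -> 0 < ln (1 + delta R n).
Proof.
move=> n0; apply: lt_le_trans (lnd_ge n0); rewrite invr_gt0.
have : 0 <= n%:R :> R by rewrite ler0n. lra.
Qed.

Lemma boxidx_mono (u v : R) : (0 < n)%N -> 0 <= u -> u <= v -> (boxidx n u <= boxidx n v)%R.
Proof.
move=> n0 u0 uv; apply: le_ceil; apply: ler_wpM2r; first by rewrite invr_ge0 ltW // lnd_gt0.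
by rewrite ler_ln ?posrE; lra.
Qed.

Lemma boxidx_ge0 (v : R) : (0 < n)%N -> 0 <= v -> (0 <= boxidx n v)%R.
Proof.
move=> n0 v0; rewrite /boxidx ceil_ge0; apply: lt_le_trans (_ : 0 <= _); first lra.
by apply: divr_ge0; [apply: ln_ge0; lra | apply: ltW; apply: lnd_gt0].
Qed.

Definition key (y : bits n) : int := (b R e w y).1 - (b R e w y).2.

Lemma key_aux y z : (0 < n)%N -> ((Cost w y)%:R <= (Cost w z)%:R :> R) ->
  ~~ fle R e w y z -> key y = key z -> b R e w y = b R e w z.
Proof.
move=> n0 cyz; rewrite /fle cyz /= -ltNge => lzy.
have h1 := boxidx_mono _ _ n0 (ler0n _ _) cyz.
have h2 := boxidx_mono _ _ n0 (LP_ge0 z) (ltW lzy).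
rewrite /key /b /= => hk; move: h1 h2 hk; set a := boxidx _ (Cost w y)%:R; set c := boxidx _ (Cost w z)%:R; set d := boxidx _ (LP R e w z); set f := boxidx _ (LP R e w y); clearbody a c d f => *; congr pair; lia.
Qed.
End Aux.

Lemma ln2_ge (R : realType) : 1/2 <= ln (2 : R).
Proof. have := @ln_lb R 1 ltr01. by rewrite (_ : (1 + 1 : R) = 2). Qed.


Theorem lemma6 (R : realType) :
  exists C : R, 0 < C /\
  forall (n : nat) (e : rel 'I_n) (w : 'I_n -> nat),
    (1 < n)%N ->
    (forall i j, e i j = e j i) ->
    (forall i, ~~ e i i) ->
    (forall i, (0 < w i)%N) ->
    forall P : {set bits n}, reachable R e w P ->
      (#|P|%:R : R) <= C * n%:R * (ln (n%:R : R) + ln ((Wmax w)%:R : R)).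
Proof.
exists 13; split; first lra.
move=> n e w n1 _ _ wpos P reP.
have n0 : (0 < n)%N by apply: ltn_trans n1.
have W1 : (1 <= Wmax w)%N := leq_trans (wpos (Ordinal n0)) (leq_bigmax _).
set W := Wmax w in W1 *.
set V := (n * W)%N.
set Mi := boxidx n (V%:R : R).
have Mi0 : (0 <= Mi)%R by apply: boxidx_ge0 => //; apply: ler0n.
have b1r y : (0 <= (b R e w y).1 <= Mi)%R.
  rewrite /= boxidx_ge0 //=; apply: boxidx_mono => //; by rewrite ler_nat Cost_le.
have b2r y : (0 <= (b R e w y).2 <= Mi)%R.
  rewrite /= boxidx_ge0 ?LP_ge0 //=; apply: boxidx_mono => //; [exact: LP_ge0| exact: LP_le].
have kinj : {in P &, injective (key R n e w)}.
  move=> y z yP zP hk; apply/eqP; apply: contraT => ne.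
  have /andP[f1 bne1] := @inv_reach R n e w P reP _ _ yP zP ne.
  have /andP[f2 bne2] := @inv_reach R n e w P reP _ _ zP yP ltac:(by rewrite eq_sym) .
  case/orP: (le_total ((Cost w y)%:R : R) (Cost w z)%:R) => c.
  - by move: bne1; rewrite (@key_aux R n e w y z n0 c f1 hk) eqxx.
  - by move: bne2; rewrite (@key_aux R n e w z y n0 c f2 (esym hk)) eqxx.
set Mn := absz Mi.
have krange y : (- Mi <= key R n e w y <= Mi)%R.
  have := b1r y; have := b2r y; rewrite /key; move: (b R e w y).1 (b R e w y).2 => u v; lia.
pose g (y : bits n) : 'I_(2 * Mn).+1 := inord (absz (key R n e w y + Mi)%R).
have ginj : {in P &, injective g}.
  move=> y z yP zP /(congr1 val) /=; rewrite /g !inordK; last 2 first.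
  - by have := krange z; rewrite /Mn; lia.
  - by have := krange y; rewrite /Mn; lia.
  move=> h; apply: kinj => //; have := krange y; have := krange z; lia.
have cardP : (#|P| <= (2 * Mn).+1)%N.
  by rewrite -(card_in_imset ginj); apply: leq_trans (max_card _) _; rewrite card_ord.
have n2 : (2 : R) <= n%:R by rewrite ler_nat.
have W1r : (1 : R) <= W%:R by rewrite ler1n.
have cardR : (#|P|%:R : R) <= 2 * Mn%:R + 1.
  have := cardP; rewrite -(ler_nat R) => h; apply: le_trans h _.
  by rewrite -addn1 natrD natrM.
have MnE : (Mn%:R : R) = Mi%:~R by rewrite natr_absz ger0_norm // ler0z.
set a := ln (1 + delta R n).
have a0 : 0 < a by apply: lnd_gt0.
have aV : a^-1 <= 2 * n%:R + 1.
  rewrite -[X in _ <= X]invrK lef_pV2 ?posrE //; last by rewrite invr_gt0; lra.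
  exact: lnd_ge.
set L := ln (1 + (V%:R : R)).
have L0 : 0 <= L by apply: ln_ge0; have := ler0n R V; lra.
have hM : (Mn%:R : R) < L / a + 1.
  rewrite MnE; have := ceilB1_lt (L / a); rewrite -/(boxidx n (V%:R)) -/Mi intrB; lra.
have ht : L / a <= (2 * n%:R + 1) * L by rewrite mulrC ler_wpM2r.
have VE : (V%:R : R) = n%:R * W%:R by rewrite natrM.
have hL : L <= ln 2 + ln n%:R + ln W%:R.
  rewrite -!lnM ?posrE; try lra.
  rewrite /L VE ler_ln ?posrE; nra.
have l2 := ln2_ge R.
have l2n : ln (2 : R) <= ln n%:R by rewrite ler_ln ?posrE; lra.
have lW : 0 <= ln (W%:R : R) by apply: ln_ge0.
set S := ln (n%:R : R) + ln (W%:R : R).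
have hL2 : L <= 2 * S by rewrite /S; lra.
have ht2 : L / a <= (2 * n%:R + 1) * (2 * S).
  apply: le_trans ht _; apply: ler_wpM2l => //; lra.
have h1 : 0 <= (n%:R - 2) * S by apply: mulr_ge0; rewrite /S; lra.
have h2 : 0 <= (n%:R - 2) * (S - 1/2) by apply: mulr_ge0; rewrite /S; lra.
have e1 : (2 * n%:R + 1) * (2 * S) = 4 * (n%:R * S) + 2 * S by ring.
have e2 : (n%:R - 2) * S = n%:R * S - 2 * S by ring.
have e3 : (n%:R - 2) * (S - 1/2) = n%:R * S - n%:R / 2 - 2 * S + 1 by field.
have e4 : 13 * n%:R * S = 13 * (n%:R * S) by ring.
have hS : 1/2 <= S by rewrite /S; lra.
rewrite -/S e4; rewrite e1 in ht2; rewrite e2 in h1; rewrite e3 in h2.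
lra.
Qed.
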